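(* Let $q_0$ and $q_1$ be quadratic linking functions on a finite abelian group $G$. Then $q_0$ is isometric to $q_1$ if and only if $(b(q_0),\beta(q_0))\cong(b(q_1),\beta(q_1))$ and $K(q_0)=K(q_1)$.
   Context: A linking form on a finite abelian group $G$ is a symmetric bilinear map $b:G\times G\to\mathbb{Q}/\mathbb{Z}$ that is nonsingular ($b(x,y)=0$ for all $x$ implies $y=0$). A quadratic linking function on $G$ is a map $q:G\to\mathbb{Q}/\mathbb{Z}$ such that $b(q)(x,y):=q(x+y)-q(x)-q(y)$ is a linking form; $q$ is a quadratic linking form if moreover $q(-x)=q(x)$. For $a\in G$, $q_a(x):=q(x)+b(q)(x,a)$. Every quadratic linking function can be written $q=q^o_a$ with $q^o$ a quadratic linking form refining $b(q)$ and $a\in G$; $\beta(q):=2a$ is independent of this choice. An isomorphism $(b_0,\beta_0)\cong(b_1,\beta_1)$ is a group automorphism $\theta$ of $G$ with $b_1(\theta x,\theta y)=b_0(x,y)$ and $\theta(\beta_0)=\beta_1$. $q_0$ and $q_1$ are isometric if $q_1\circ\theta=q_0$ for some automorphism $\theta$. The Kervaire–Arf invariant is $K(q)=\arg(GS(q))/2\pi\in\mathbb{Q}/\mathbb{Z}$, where $GS(q)=\sum_{x\in G}\exp(2\pi i\,q(x))$ (this sum is nonzero). *)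

(* Defs.v *)
From Stdlib Require Import ClassicalEpsilon.
From mathcomp Require Import all_boot all_order all_algebra.
From mathcomp Require Import complex.
From mathcomp Require Import reals trigo Rstruct.
Set Implicit Arguments.
Unset Strict Implicit.
Unset Printing Implicit Defensive.
Import GRing.Theory Num.Theory.
Local Open Scope ring_scope.

(* Q/Z-valued maps are modelled as rat-valued maps; equality in Q/Z is
   congruence modulo the integers. *)
Definition eqQZ (x y : rat) : Prop := (x - y) \is a Num.int.

Definition is_aut (G : finZmodType) (th : G -> G) : Prop :=
  {morph th : x y / x + y} /\ bijective th.

Definition linking_form (G : finZmodType) (b : G -> G -> rat) : Prop :=
  [/\ (forall x y, eqQZ (b x y) (b y x)),
      (forall x y z, eqQZ (b (x + y) z) (b x z + b y z)),
      (forall x y z, eqQZ (b x (y + z)) (b x y + b x z)) &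
      (forall y, (forall x, eqQZ (b x y) 0) -> y = 0)].

Definition bq (G : finZmodType) (q : G -> rat) (x y : G) : rat :=
  q (x + y) - q x - q y.

Definition quad_linking_function (G : finZmodType) (q : G -> rat) : Prop :=
  linking_form (bq q).

Definition quad_linking_form (G : finZmodType) (q : G -> rat) : Prop :=
  quad_linking_function q /\ (forall x, eqQZ (q (- x)) (q x)).

Definition qshift (G : finZmodType) (q : G -> rat) (a : G) (x : G) : rat :=
  q x + bq q x a.

(* beta(q) := 2a where q = q^o_a with q^o a quadratic linking form refining b(q)
   (the choice of a is made by Hilbert's epsilon; the paper shows 2a does
   not depend on the choice). *)
Definition beta (G : finZmodType) (q : G -> rat) : G :=
  let a := epsilon (inhabits (0 : G))
     (fun a => exists qo : G -> rat,
        [/\ quad_linking_form qo,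
            (forall x y, eqQZ (bq qo x y) (bq q x y)) &
            (forall x, eqQZ (q x) (qshift qo a x))]) in
  a + a.

Definition iso_pair (G : finZmodType) (b0 : G -> G -> rat) (beta0 : G)
    (b1 : G -> G -> rat) (beta1 : G) : Prop :=
  exists th : G -> G,
    [/\ is_aut th, (forall x y, eqQZ (b1 (th x) (th y)) (b0 x y)) & th beta0 = beta1].

Definition isometric (G : finZmodType) (q0 q1 : G -> rat) : Prop :=
  exists th : G -> G, is_aut th /\ (forall x, eqQZ (q1 (th x)) (q0 x)).

Definition RR := Rdefinitions.R.

Local Open Scope complex_scope.

Definition expi (t : RR) : RR[i] := cos (2 * pi * t) +i* sin (2 * pi * t).

Definition GS (G : finZmodType) (q : G -> rat) : RR[i] :=
  \sum_(x : G) expi (ratr (q x)).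

(* Kervaire-Arf invariant K(q) = arg(GS(q)) / 2pi, normalized in [0,1)
   (i.e. the representative in [0,1) of the class in Q/Z). *)
Definition Kinv (G : finZmodType) (q : G -> rat) : RR :=
  epsilon (inhabits (0 : RR))
    (fun t => (0 <= t < 1)%R /\ GS q = `|GS q| * expi t).

(* Main.v *)
Require Import Defs.
From mathcomp Require Import all_boot all_order all_algebra.
From mathcomp Require Import complex reals trigo Rstruct.
From Stdlib Require Import ClassicalEpsilon.
From mathcomp Require Import ring lra zify.
Set Implicit Arguments.
Unset Strict Implicit.
Unset Printing Implicit Defensive.
Import Order.TTheory GRing.Theory Num.Theory.
Local Open Scope ring_scope.

Lemma eqQZ_refl x : eqQZ x x.
Proof. by rewrite /eqQZ subrr int_num0. Qed.

Lemma eqQZ_sym x y : eqQZ x y -> eqQZ y x.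
Proof. by rewrite /eqQZ => h; rewrite -opprB rpredN. Qed.

Lemma eqQZ_trans x y z : eqQZ x y -> eqQZ y z -> eqQZ x z.
Proof. by rewrite /eqQZ => h1 h2; rewrite -(subrKA y) rpredD. Qed.

Lemma eqQZ_add a b c d : eqQZ a b -> eqQZ c d -> eqQZ (a + c) (b + d).
Proof. rewrite /eqQZ => h1 h2; rewrite opprD addrACA rpredD //. Qed.

Lemma eqQZ_opp a b : eqQZ a b -> eqQZ (- a) (- b).
Proof. by rewrite /eqQZ => h; rewrite -opprD rpredN. Qed.

Lemma eqQZ_sub a b c d : eqQZ a b -> eqQZ c d -> eqQZ (a - c) (b - d).
Proof. by move=> h1 h2; apply: eqQZ_add => //; apply: eqQZ_opp. Qed.

Lemma eqQZ_muln a b n : eqQZ a b -> eqQZ (a *+ n) (b *+ n).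
Proof. by rewrite /eqQZ => h; rewrite -mulrnBl rpredMn. Qed.

Lemma eqQZ_int x y : x \is a Num.int -> eqQZ (x + y) y.
Proof. by rewrite /eqQZ addrK. Qed.

Lemma eqQZ_eq x y : x = y -> eqQZ x y.
Proof. by move=> ->; apply: eqQZ_refl. Qed.

Lemma half_not_int : (2^-1 : rat) \isn't a Num.int.
Proof. by rewrite intrEfloor floorErat. Qed.

Local Open Scope complex_scope.
Definition e (t : rat) : RR[i] := expi (ratr t).

Lemma expiD (a b : RR) : expi (a + b) = expi a * expi b.
Proof.
rewrite /expi mulrDr trigo.cosD trigo.sinD.
apply/eqP; rewrite eq_complex /=. apply/andP; split; apply/eqP; ring.
Qed.

Lemma e_add s t : e (s + t) = e s * e t.
Proof. by rewrite /e rmorphD expiD. Qed.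

Lemma expi0 : expi 0 = 1.
Proof. by rewrite /expi mulr0 trigo.cos0 trigo.sin0. Qed.

Lemma e0 : e 0 = 1.
Proof. by rewrite /e rmorph0 expi0. Qed.

Lemma e1 : e 1 = 1.
Proof.
rewrite /e rmorph1 /expi mulr1 -[2]/(2%:R) mulr_natl trigo.cos2pi trigo.sin2pi.
by [].
Qed.

Lemma e_nat n : e n%:R = 1.
Proof.
elim: n => [|n IH]; first exact: e0.
by rewrite -addn1 natrD e_add IH e1 mulr1.
Qed.

Lemma eNK t : e (- t) * e t = 1.
Proof. by rewrite -e_add addNr e0. Qed.

Lemma e_int k : e k%:~R = 1.
Proof.
case: k => n; first exact: e_nat.
rewrite NegzE.
have := eNK (n.+1%:R). rewrite e_nat mulr1 => <-.
by rewrite rmorphN.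
Qed.

Lemma e_intQ t : t \is a Num.int -> e t = 1.
Proof. by move=> /intrP [k ->]; exact: e_int. Qed.

Lemma e_eqQZ s t : eqQZ s t -> e s = e t.
Proof.
by move=> h; rewrite -(subrK t s) e_add (e_intQ h) mul1r.
Qed.

Lemma norm_expi x : `|expi x| = 1.
Proof.
rewrite /expi /Num.norm /=. 
rewrite trigo.cos2Dsin2 sqrtr1. by [].
Qed.

Lemma e_eq1 t : e t = 1 -> t \is a Num.int.
Proof.
set k := Num.floor t; set f := t - k%:~R.
have f0 : 0 <= f by rewrite subr_ge0 floor_le.
have f1 : f < 1 by have := floorD1_gt t; rewrite intrD /f -/k; lra.
have -> : e t = e f by apply: e_eqQZ; rewrite /eqQZ /f opprB addrC subrK intr_int.
have [fz|fn0] := eqVneq f 0.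
  move=> _; have -> : t = k%:~R by move/eqP: fz; rewrite /f subr_eq0 => /eqP.
  exact: intr_int.
rewrite /e /expi => -[hc hs].
have fp : 0 < f by rewrite lt_def fn0 f0.
have rp : (0 : RR) < ratr f by rewrite -(rmorph0 (@ratr RR)) ltr_rat.
have r1 : ratr f < (1 : RR) by rewrite -(rmorph1 (@ratr RR)) ltr_rat.
set x := 2 * pi * ratr f in hc hs.
have pip := @trigo.pi_gt0 RR.
have x0 : 0 < x by rewrite /x; nra.
have x2 : x < pi *+ 2 by rewrite /x -mulr_natl; nra.
case: (ltgtP x pi) => hx.
- have := trigo.sin_gt0_pi (x := x); rewrite x0 hx hs => /(_ isT).
  by rewrite ltxx.
- have h1 : 0 < x - pi < pi by rewrite subr_gt0 hx ltrBlDr -mulr2n.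
  have := trigo.sin_gt0_pi h1. have := trigo.sinDpi (x - pi). 
  rewrite subrK hs => /eqP; rewrite eq_sym oppr_eq0 => /eqP ->.
  by rewrite ltxx.
- move: hc; rewrite hx trigo.cospi => /eqP.
  by rewrite eq_sym -subr_eq0 opprK -mulr2n pnatr_eq0.
Qed.

Lemma polar (z : RR[i]) : exists t : RR, (0 <= t < 1)%R /\ z = `|z| * expi t.
Proof.
case: z => a b.
have [z0|zn0] := eqVneq (a +i* b) 0.
  by exists 0; rewrite z0 normr0 mul0r lexx ltr01.
set r := Num.sqrt (a ^+ 2 + b ^+ 2).
have nz : `|a +i* b| = r%:C by [].
have s0 : 0 <= a ^+ 2 + b ^+ 2 by rewrite addr_ge0 // sqr_ge0.
have rn0 : r != 0.
  apply: contra zn0; rewrite sqrtr_eq0 => h.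
  have := sqr_ge0 a; have := sqr_ge0 b => hb0 ha0.
  have ha : a ^+ 2 = 0 by apply/eqP; rewrite eq_le sqr_ge0 andbT; lra.
  have hb : b ^+ 2 = 0 by apply/eqP; rewrite eq_le sqr_ge0 andbT; lra.
  move/eqP: ha; rewrite sqrf_eq0 => /eqP ->; move/eqP: hb; rewrite sqrf_eq0 => /eqP ->.
  by [].
have rp : 0 < r by rewrite lt_def rn0 sqrtr_ge0.
have rr : r ^+ 2 = a ^+ 2 + b ^+ 2 by rewrite sqr_sqrtr.
set u := a / r; set v := b / r.
have uv : u ^+ 2 + v ^+ 2 = 1.
  rewrite /u /v !expr_div_n -mulrDl -rr divff //; exact: expf_neq0.
have u1 : -1 <= u <= 1.
  have : u ^+ 2 <= 1 by rewrite -uv lerDl sqr_ge0.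
  by move=> h; apply/andP; split; nra.
have hc := @acosK RR u; rewrite in_itv /= u1 in hc; have {}hc := hc isT.
have hs := sin_acos u1.
have hsv : Num.sqrt (1 - u ^+ 2) = `|v| by rewrite -uv addrC addKr sqrtr_sqr.
rewrite hsv in hs.
have a0 := acos_ge0 u1; have api := acos_lepi u1.
have pip := @trigo.pi_gt0 RR.
have ae : a = r * u by rewrite /u mulrC divfK.
have be : b = r * v by rewrite /v mulrC divfK.
have pin0 : (2 * pi : RR) != 0 by rewrite mulf_neq0 // ?lt0r_neq0.
rewrite nz.
case: (lerP 0 v) => hv.
  exists (acos u / (2 * pi)); split.
    apply/andP; split; first by apply: divr_ge0 => //; lra.
    rewrite ltr_pdivrMr; last lra. rewrite mul1r; lra.
  rewrite /expi (_ : 2 * pi * (acos u / (2 * pi)) = acos u); last by rewrite mulrC divfK.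
  rewrite hc hs ger0_norm //.
  apply/eqP; rewrite eq_complex /= !mul0r subr0 addr0 ae be !eqxx //.
exists (1 - acos u / (2 * pi)); split.
  have ua : u < 1.
    rewrite lt_neqAle (andP u1).2 andbT; apply/eqP => hu1.
    move: uv; rewrite hu1 expr1n => h; have /eqP : v ^+ 2 = 0 by lra.
    by rewrite sqrf_eq0 => /eqP h0; rewrite h0 ltxx in hv.
  have ag := @acos_gt0 RR u; rewrite (andP u1).1 ua in ag; have {}ag := ag isT.
  apply/andP; split.
    rewrite subr_ge0 ler_pdivrMr; last lra. rewrite mul1r; lra.
  rewrite ltrBlDr ltrDl; apply: divr_gt0 => //; lra.
rewrite /expi (_ : 2 * pi * (1 - acos u / (2 * pi)) = - acos u + pi *+ 2); last first.
  have e2 : 2 * pi * (acos u / (2 * pi)) = acos u by rewrite mulrC divfK.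
  by rewrite mulrBr mulr1 e2 addrC mulr_natl.
have hc2 : cos (- acos u + pi *+ 2) = cos (- acos u) := trigo.cosD2pi _.
have hs2 : sin (- acos u + pi *+ 2) = sin (- acos u) := trigo.sinD2pi _.
rewrite hc2 hs2 trigo.cosN trigo.sinN hc hs ltr0_norm //.
apply/eqP; rewrite eq_complex /= !mul0r subr0 addr0 opprK ae be !eqxx //.
Qed.

Section G.
Variable G : finZmodType.

Definition homQZ (l : G -> rat) := forall x y, eqQZ (l (x + y)) (l x + l y).

Lemma eqQZ_subr0 a b : eqQZ (a - b) 0 <-> eqQZ a b.
Proof. by rewrite /eqQZ subr0. Qed.

Lemma chi_sum0 (l : G -> rat) y0 : homQZ l -> ~ eqQZ (l y0) 0 ->
  \sum_(y : G) e (l y) = 0.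
Proof.
move=> hl hy0.
have : \sum_(y : G) e (l y) = e (l y0) * \sum_(y : G) e (l y).
  rewrite mulr_sumr {1}(reindex_inj (addIr y0)) /=.
  apply: eq_bigr => y _; rewrite -e_add; apply: e_eqQZ.
  by rewrite [y + y0]addrC; apply: hl.
move=> /eqP; rewrite -subr_eq0 -{1}(mul1r (\sum_(y : G) _)) -mulrBl mulf_eq0.
case/orP => [|/eqP //].
rewrite subr_eq0 eq_sym => /eqP /e_eq1 h; exfalso; apply: hy0.
by rewrite /eqQZ subr0.
Qed.

Section LF.
Variable b : G -> G -> rat.
Hypothesis hb : linking_form b.

Lemma lf_sym x y : eqQZ (b x y) (b y x).
Proof. by case: hb => h _ _ _; apply: h. Qed.
Lemma lf_l x y z : eqQZ (b (x + y) z) (b x z + b y z).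
Proof. by case: hb => _ h _ _; apply: h. Qed.
Lemma lf_r x y z : eqQZ (b x (y + z)) (b x y + b x z).
Proof. by case: hb => _ _ h _; apply: h. Qed.
Lemma lf_ns y : (forall x, eqQZ (b x y) 0) -> y = 0.
Proof. by case: hb => _ _ _ h; apply: h. Qed.

Lemma lf_0l z : eqQZ (b 0 z) 0.
Proof.
have := lf_l 0 0 z; rewrite addr0.
by rewrite /eqQZ -rpredN opprB addrK subr0.
Qed.

Lemma lf_0r z : eqQZ (b z 0) 0.
Proof. exact: eqQZ_trans (lf_sym _ _) (lf_0l _). Qed.

Lemma lf_Mnl x z n : eqQZ (b (x *+ n) z) (b x z *+ n).
Proof.
elim: n => [|n IH]; first by rewrite !mulr0n; apply: lf_0l.
rewrite !mulrS; apply: eqQZ_trans (lf_l _ _ _) _.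
by apply: eqQZ_add => //; apply: eqQZ_refl.
Qed.

Lemma lf_Mnr x z n : eqQZ (b z (x *+ n)) (b x z *+ n).
Proof. exact: eqQZ_trans (lf_sym _ _) (lf_Mnl _ _ _). Qed.

Lemma lf_Nl x z : eqQZ (b (- x) z) (- b x z).
Proof.
have h := lf_l x (- x) z; rewrite subrr in h.
have h0 := lf_0l z.
move: h h0; rewrite /eqQZ => h h0.
have -> : b (- x) z - - b x z = (b 0 z - 0) - (b 0 z - (b x z + b (- x) z)) by ring.
by rewrite rpredB.
Qed.

Lemma dual (l : G -> rat) n : homQZ l ->
  (forall y, y *+ n = 0 -> eqQZ (l y) 0) ->
  exists a, forall x, eqQZ (l x) (b x (a *+ n)).
Proof.
move=> hl hker; apply: NNPP => hno.
have S0 : forall a, \sum_(y : G) e (l y - b y (a *+ n)) = 0.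
  move=> a.
  have [y0 hy0] : exists y0, ~ eqQZ (l y0 - b y0 (a *+ n)) 0.
    apply: NNPP => hn; apply: hno; exists a => x.
    apply/eqQZ_subr0; apply: NNPP => hx; apply: hn; by exists x.
  apply: (chi_sum0 (y0 := y0)) hy0 => x y.
  rewrite /eqQZ.
  have h1 := hl x y; have h2 := lf_l x y (a *+ n); move: h1 h2; rewrite /eqQZ => h1 h2.
  have -> : l (x + y) - b (x + y) (a *+ n) - (l x - b x (a *+ n) + (l y - b y (a *+ n)))
     = (l (x + y) - (l x + l y)) - (b (x + y) (a *+ n) - (b x (a *+ n) + b y (a *+ n))) by ring.
  by rewrite rpredB.
have inner : forall y : G, \sum_(a : G) e (l y - b y (a *+ n))
    = if y *+ n == 0 then #|G|%:R else 0.
  move=> y; case: eqP => hy.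
    rewrite -sumr_const; apply: eq_bigr => a _.
    rewrite -e0; apply: e_eqQZ.
    have h1 := hker y hy; have h2 := lf_Mnr a y n; have h3 := lf_Mnl y a n.
    have h4 := lf_0l a.
    rewrite hy in h3.
    move: h1 h2 h3 h4; rewrite /eqQZ => h1 h2 h3 h4.
    have -> : l y - b y (a *+ n) - 0 = (l y - 0) - (b y (a *+ n) - b a y *+ n)
         - (b a y *+ n - b y a *+ n) + (b 0 a - b y a *+ n) - (b 0 a - 0) by ring.
    apply: rpredB => //; apply: rpredD => //; apply: rpredB; first exact: rpredB.
    rewrite -mulrnBl; apply: rpredMn; rewrite -opprB rpredN.
    by case: hb => hs _ _ _; apply: hs.
  under eq_bigr do rewrite e_add.
  rewrite -mulr_sumr.
  have [x hx] : exists x, ~ eqQZ (b x (y *+ n)) 0.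
    apply: NNPP => hn; apply: hy; apply: lf_ns => x; apply: NNPP => hx; apply: hn; by exists x.
  rewrite (@chi_sum0 (fun a => - b y (a *+ n)) x) ?mulr0 //.
    move=> u v; rewrite mulrnDl.
    have h := lf_r y (u *+ n) (v *+ n); move: h; rewrite /eqQZ => h.
    rewrite /eqQZ.
    have -> : - b y (u *+ n + v *+ n) - (- b y (u *+ n) + - b y (v *+ n)) = - (b y (u *+ n + v *+ n) - (b y (u *+ n) + b y (v *+ n))) by ring.
    by rewrite rpredN.
  move=> hc; apply: hx.
  have h2 := lf_Mnr x y n; have h3 := lf_Mnl y x n; have h5 := lf_sym x y.
  have h6 := lf_sym x (y *+ n).
  move: hc h2 h3 h5 h6; rewrite /eqQZ => hc h2 h3 h5 h6.
  have -> : b x (y *+ n) - 0 = (b x (y *+ n) - b (y *+ n) x) + (b (y *+ n) x - b y x *+ n)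
     - (b x y - b y x) *+ n - (b y (x *+ n) - b x y *+ n) - (- b y (x *+ n) - 0).
    rewrite mulrnBl; ring.
  apply: rpredB => //; apply: rpredB => //; apply: rpredB; first exact: rpredD.
  exact: rpredMn.
have : \sum_(a : G) \sum_(y : G) e (l y - b y (a *+ n)) = 0.
  by rewrite big1 // => a _; apply: S0.
rewrite exchange_big /=.
under eq_bigr do rewrite inner.
rewrite -big_mkcond /= sumr_const -mulrnA /=.
apply/eqP; rewrite pnatr_eq0 muln_eq0 negb_or -!lt0n; apply/andP; split.
  by apply/card_gt0P; exists 0.
by apply/card_gt0P; exists 0; rewrite unfold_in /= mul0rn; apply/eqP.
Qed.

End LF.
End G.

Section Q.
Variable G : finZmodType.
Implicit Types q : G -> rat.

Lemma lf_Nr (b : G -> G -> rat) (hb : linking_form b) x z : eqQZ (b z (- x)) (- b z x).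
Proof.
apply: eqQZ_trans (lf_sym hb _ _) _; apply: eqQZ_trans (lf_Nl hb _ _) _.
apply: eqQZ_opp; exact: lf_sym.
Qed.

Lemma lf_NN (b : G -> G -> rat) (hb : linking_form b) x y : eqQZ (b (- x) (- y)) (b x y).
Proof.
apply: eqQZ_trans (lf_Nl hb _ _) _; rewrite -[b x y]opprK; apply: eqQZ_opp.
exact: lf_Nr.
Qed.

Lemma qlf_0 q : quad_linking_function q -> eqQZ (q 0) 0.
Proof.
move=> hq; have := lf_0l hq 0; rewrite /bq addr0 /eqQZ !subr0 => h.
have -> : q 0 = - (q 0 - q 0 - q 0) by ring.
by rewrite rpredN.
Qed.

Lemma lf_congr (b b' : G -> G -> rat) : linking_form b ->
  (forall x y, eqQZ (b' x y) (b x y)) -> linking_form b'.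
Proof.
move=> hb h; split.
- move=> x y; apply: eqQZ_trans (h x y) _; apply: eqQZ_trans (lf_sym hb x y) _.
  exact: eqQZ_sym.
- move=> x y z; apply: eqQZ_trans (h _ _) _; apply: eqQZ_trans (lf_l hb x y z) _.
  by apply: eqQZ_add; apply: eqQZ_sym.
- move=> x y z; apply: eqQZ_trans (h _ _) _; apply: eqQZ_trans (lf_r hb x y z) _.
  by apply: eqQZ_add; apply: eqQZ_sym.
- move=> y hy; apply: (lf_ns hb) => x; exact: eqQZ_trans (eqQZ_sym (h x y)) (hy x).
Qed.

Lemma bq_congr q q' : (forall x, eqQZ (q' x) (q x)) ->
  forall x y, eqQZ (bq q' x y) (bq q x y).
Proof. by move=> h x y; rewrite /bq; apply: eqQZ_sub; [apply: eqQZ_sub|]. Qed.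

Lemma qlf_congr q q' : quad_linking_function q -> (forall x, eqQZ (q' x) (q x)) ->
  quad_linking_function q'.
Proof. by move=> hq h; apply: (lf_congr hq); apply: bq_congr. Qed.

Lemma bq_addhom q (h : G -> rat) : homQZ h ->
  forall x y, eqQZ (bq (fun z => q z + h z) x y) (bq q x y).
Proof.
move=> hh x y; rewrite /eqQZ /bq /=.
have -> : q (x + y) + h (x + y) - (q x + h x) - (q y + h y) - (q (x + y) - q x - q y)
  = h (x + y) - (h x + h y) by ring.
exact: hh.
Qed.

Lemma homQZ_bl (b : G -> G -> rat) (hb : linking_form b) a : homQZ (fun x => - b x a).
Proof.
move=> x y; have := lf_l hb x y a; rewrite /eqQZ => h.
have -> : - b (x + y) a - (- b x a + - b y a) = - (b (x + y) a - (b x a + b y a)) by ring.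
by rewrite rpredN.
Qed.

Lemma aut0 (th : G -> G) : is_aut th -> th 0 = 0.
Proof.
case=> hm _; have := hm 0 0; rewrite addr0 => h.
by apply: (@addrI _ (th 0)); rewrite addr0 -h.
Qed.

Lemma aut_inv (th : G -> G) : is_aut th ->
  exists g, [/\ is_aut g, cancel th g & cancel g th].
Proof.
case=> hm [g c1 c2]; exists g; split => //; split; last by exists th.
by move=> x y; apply: (can_inj c1); rewrite hm !c2.
Qed.

Lemma lf_aut (b : G -> G -> rat) th : linking_form b -> is_aut th ->
  linking_form (fun x y => b (th x) (th y)).
Proof.
move=> hb hth; have [hm [g c1 c2]] := hth; split => /=.
- move=> x y; exact: lf_sym.
- move=> x y z /=; rewrite hm; exact: lf_l.
- move=> x y z /=; rewrite hm; exact: lf_r.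
- move=> y hy; apply: (can_inj c1); rewrite (aut0 hth); apply: (lf_ns hb) => x.
  rewrite -(c2 x); exact: hy.
Qed.

Lemma bq_comp q (th : G -> G) : {morph th : x y / x + y} ->
  forall x y, bq (fun z => q (th z)) x y = bq q (th x) (th y).
Proof. by move=> hm x y; rewrite /bq /= hm. Qed.

Lemma qlf_comp q (th : G -> G) : quad_linking_function q -> is_aut th ->
  quad_linking_function (fun x => q (th x)).
Proof.
move=> hq hth; apply: (@lf_congr (fun x y => bq q (th x) (th y))).
  exact: (@lf_aut (bq q) th hq hth).
move=> x y.
apply: eqQZ_eq; apply: bq_comp; by case: hth.
Qed.

Definition Pbeta q (a : G) := exists qo : G -> rat,
  [/\ quad_linking_form qo, (forall x y, eqQZ (bq qo x y) (bq q x y)) &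
      (forall x, eqQZ (q x) (qshift qo a x))].

Lemma beta_exists q : quad_linking_function q -> exists a, Pbeta q a.
Proof.
move=> hq.
pose l := fun x => q x - q (- x).
have hl : homQZ l.
  move=> x y; rewrite /l /eqQZ opprD.
  have := lf_NN hq x y; rewrite /eqQZ /bq => h.
  have -> : q (x + y) - q (- x + - y) - (q x - q (- x) + (q y - q (- y)))
    = - (q (- x + - y) - q (- x) - q (- y) - (q (x + y) - q x - q y)) by ring.
  by rewrite rpredN.
have hk : forall y, y *+ 2 = 0 -> eqQZ (l y) 0.
  move=> y hy; rewrite /l; have -> : - y = y by apply/eqP; rewrite eq_sym -addr_eq0 -mulr2n hy.
  by rewrite subrr; apply: eqQZ_refl.
have [a ha] := @dual _ _ hq l 2 hl hk.
exists a; exists (fun x => q x + - bq q x a).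
have hbq := bq_addhom q (homQZ_bl hq a).
split.
- split; first exact: lf_congr hq hbq.
  move=> x /=.
  have h1 := ha x; have h2 := lf_Mnr hq a x 2; have h3 := lf_sym hq a x; have h4 := lf_Nl hq x a.
  move: h1 h2 h3 h4; rewrite /eqQZ /l => h1 h2 h3 h4.
  set B2 := bq q x (a *+ 2) in h1 h2 *.
  have -> : q (- x) + - bq q (- x) a - (q x + - bq q x a) =
    - (q x - q (- x) - B2) - (B2 - bq q a x *+ 2) - (bq q a x - bq q x a) *+ 2
    - (bq q (- x) a - - bq q x a).
    rewrite !mulr2n; ring.
  apply: rpredB => //; apply: rpredB; last exact: rpredMn.
  by apply: rpredB => //; rewrite rpredN.
- exact: hbq.
- move=> x; rewrite /qshift /=; have := hbq x a; rewrite /eqQZ => h.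
  have -> : q x - (q x + - bq q x a + bq (fun z => q z + - bq q z a) x a)
    = - (bq (fun z => q z + - bq q z a) x a - bq q x a) by ring.
  by rewrite rpredN.
Qed.

Ltac intcomb := repeat first [ assumption | apply: rpredB | apply: rpredD | rewrite rpredN | apply: rpredMn ].

Lemma beta_uniq q a a' : quad_linking_function q -> Pbeta q a -> Pbeta q a' -> a + a = a' + a'.
Proof.
move=> hq [qo [[hqo hev] hb1 hs1]] [qo' [[hqo' hev'] hb2 hs2]].
have hd : (a' - a) *+ 2 = 0.
  apply: (lf_ns hq) => x.
  have h1 := hs1 x; have h2 := hs2 x; have h3 := hs1 (- x); have h4 := hs2 (- x).
  have h5 := hev x; have h6 := hev' x.
  have h7 := hb1 x a; have h8 := hb2 x a'; have h9 := hb1 (- x) a; have h10 := hb2 (- x) a'.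
  have h11 := lf_Nl hq x a; have h12 := lf_Nl hq x a'.
  have h13 := lf_Mnr hq (a' - a) x 2; have h14 := lf_sym hq (a' - a) x.
  have h15 := lf_r hq x a' (- a); have h16 := lf_Nr hq a x.
  move: h1 h2 h3 h4 h5 h6 h7 h8 h9 h10 h11 h12 h13 h14 h15 h16.
  rewrite /eqQZ /qshift => h1 h2 h3 h4 h5 h6 h7 h8 h9 h10 h11 h12 h13 h14 h15 h16.
  set Q := q x in h1 h2; set Qn := q (- x) in h3 h4.
  set B := bq q in h7 h8 h9 h10 h11 h12 h13 h14 h15 h16 *.
  have -> : B x ((a' - a) *+ 2) - 0 =
    (B x ((a' - a) *+ 2) - B (a' - a) x *+ 2) + (B (a' - a) x - B x (a' - a)) *+ 2
    + (B x (a' - a) - (B x a' + B x (- a))) *+ 2 + (B x (- a) - - B x a) *+ 2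
    + (((Q - (qo x + bq qo x a)) - (Q - (qo' x + bq qo' x a')) - (bq qo' x a' - B x a')
         + (bq qo x a - B x a))
       - ((Qn - (qo (- x) + bq qo (- x) a)) - (Qn - (qo' (- x) + bq qo' (- x) a'))
          - (bq qo' (- x) a' - B (- x) a') + (bq qo (- x) a - B (- x) a)
          - (B (- x) a' - - B x a') + (B (- x) a - - B x a)
          - (qo' (- x) - qo' x) + (qo (- x) - qo x))).
    rewrite !mulr2n; ring.
  intcomb.
move/eqP: hd; rewrite mulrnBl subr_eq0 !mulr2n => /eqP ->; by [].
Qed.

Lemma beta_spec q a : quad_linking_function q -> Pbeta q a -> beta q = a + a.
Proof.
move=> hq ha; rewrite /beta /=.
have he := epsilon_spec (inhabits (0 : G)) (Pbeta q) (ex_intro _ a ha).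
exact: beta_uniq hq he ha.
Qed.

Lemma beta_congr q q' : quad_linking_function q -> (forall x, eqQZ (q' x) (q x)) ->
  beta q' = beta q.
Proof.
move=> hq h; have [a ha] := beta_exists hq.
have hq' := qlf_congr hq h.
rewrite (beta_spec hq ha); apply: beta_spec => //.
case: ha => qo [hqo hb hs]; exists qo; split => //.
  move=> x y; apply: eqQZ_trans (hb x y) _; apply: eqQZ_sym; exact: bq_congr.
move=> x; exact: eqQZ_trans (h x) (hs x).
Qed.

Lemma beta_shift q c : quad_linking_function q -> beta (qshift q c) = beta q + (c + c).
Proof.
move=> hq; have [a ha] := beta_exists hq.
have hh : homQZ (fun x => bq q x c) by move=> x y; exact: lf_l.
have hbs := bq_addhom q hh.
have hqs : quad_linking_function (qshift q c) by apply: (lf_congr hq); exact: hbs.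
rewrite (beta_spec hq ha) (@beta_spec _ (a + c) hqs); first by rewrite addrACA.
case: ha => qo [[hqo hev] hb hs]; exists qo; split => //.
  move=> x y; apply: eqQZ_trans (hb x y) _; apply: eqQZ_sym; exact: hbs.
move=> x; rewrite /qshift.
apply: eqQZ_trans (eqQZ_add (hs x) (eqQZ_sym (hb x c))) _.
rewrite /qshift -addrA; apply: eqQZ_add; first exact: eqQZ_refl.
apply: eqQZ_sym; exact: lf_r.
Qed.

Lemma aut_N (g : G -> G) x : is_aut g -> g (- x) = - g x.
Proof.
move=> hg; have h0 := aut0 hg; case: hg => hm _.
by apply/eqP; rewrite -addr_eq0 -hm addNr h0.
Qed.

Lemma beta_aut q0 q1 (th : G -> G) : is_aut th -> quad_linking_function q0 ->
  quad_linking_function q1 -> (forall x, eqQZ (q1 (th x)) (q0 x)) ->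
  th (beta q0) = beta q1.
Proof.
move=> hth hq0 hq1 h.
have [g [hg c1 c2]] := aut_inv hth.
have hgm : {morph g : x y / x + y} by case: hg.
have [a ha] := beta_exists hq0.
rewrite (beta_spec hq0 ha).
have hq10 : forall z, eqQZ (q0 (g z)) (q1 z).
  by move=> z; have := h (g z); rewrite c2 => hz; apply: eqQZ_sym.
rewrite (@beta_spec _ (th a) hq1); first by case: hth => hm _; rewrite hm.
case: ha => qo [[hqo hev] hb hs]; exists (fun x => qo (g x)); split.
- split; first exact: qlf_comp hqo hg.
  by move=> x /=; rewrite (aut_N _ hg); apply: hev.
- move=> x y; rewrite (bq_comp _ hgm).
  apply: eqQZ_trans (hb _ _) _; rewrite -(bq_comp _ hgm); exact: bq_congr.
- move=> x; apply: eqQZ_trans (eqQZ_sym (hq10 x)) _.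
  apply: eqQZ_trans (hs (g x)) _; apply: eqQZ_eq.
  by rewrite /qshift (bq_comp _ hgm) c1.
Qed.

End Q.

Lemma norm_e t : `|e t| = 1.
Proof. exact: norm_expi. Qed.

Lemma half_cases (t : rat) : t *+ 2 \is a Num.int -> t \is a Num.int \/ (t - 2^-1) \is a Num.int.
Proof.
move=> /intrP [k hk].
have ht : t = k%:~R / 2 by rewrite -hk mulr2n; field.
have hkr := divz_eq k 2.
have r0 : (0 <= (k %% 2)%Z)%R by apply: modz_ge0.
have r2 : ((k %% 2)%Z < 2)%R by apply: ltz_pmod.
have : (k %% 2)%Z = 0 \/ (k %% 2)%Z = 1 by lia.
case=> hr; [left|right]; rewrite ht hkr hr.
  have -> : (((k %/ 2)%Z * 2 + 0)%:~R / 2 : rat) = ((k %/ 2)%Z)%:~R.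
    by rewrite addr0 intrM; field.
  exact: intr_int.
have -> : (((k %/ 2)%Z * 2 + 1)%:~R / 2 - 2^-1 : rat) = ((k %/ 2)%Z)%:~R.
  by rewrite intrD intrM; field.
exact: intr_int.
Qed.

Lemma int_eqQZ (s t : rat) : eqQZ s t -> (s \is a Num.int) = (t \is a Num.int).
Proof.
rewrite /eqQZ => h; apply/idP/idP => hx.
  have -> : t = s - (s - t) by rewrite opprB addrC subrK.
  by apply: rpredB.
by rewrite -(subrK t s); apply: rpredD.
Qed.

Lemma half_add (t s : rat) : t *+ 2 \is a Num.int -> s *+ 2 \is a Num.int ->
  ((t + s) \is a Num.int) = ((t \is a Num.int) == (s \is a Num.int)).
Proof.
move=> ht hs.
have nZ : forall u : rat, u \is a Num.int -> (u - 2^-1) \is a Num.int -> False.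
  move=> u h1 h2; move/negP: half_not_int; apply.
  have -> : (2^-1 : rat) = u - (u - 2^-1) by ring.
  exact: rpredB.
case: (half_cases ht) => [ti|ti']; case: (half_cases hs) => [si|si'].
- by rewrite rpredD // ti si.
- have sn : s \isn't a Num.int by apply/negP => h; exact: nZ _ h si'.
  have tsn : (t + s) \isn't a Num.int.
    apply/negP => h; apply: (nZ (t + s)) => //.
    by rewrite -addrA rpredD.
  by rewrite ti (negbTE sn) (negbTE tsn).
- have tn : t \isn't a Num.int by apply/negP => h; exact: nZ _ h ti'.
  have tsn : (t + s) \isn't a Num.int.
    apply/negP => h; apply: (nZ (t + s)) => //.
    by rewrite addrAC rpredD.
  by rewrite si (negbTE tn) (negbTE tsn).
- have tn : t \isn't a Num.int by apply/negP => h; exact: nZ _ h ti'.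
  have sn : s \isn't a Num.int by apply/negP => h; exact: nZ _ h si'.
  rewrite (negbTE tn) (negbTE sn) /=.
  have -> : t + s = (t - 2^-1) + (s - 2^-1) + 1.
    by rewrite addrACA -opprD -[X in _ - X + 1](@mulr2n rat) -[2^-1 *+ 2]mulr_natr mulVf // subrK.
  by apply: rpredD; [exact: rpredD | exact: int_num1].
Qed.

Section R.
Variable G : finZmodType.
Implicit Types q : G -> rat.

Lemma GS_congr q q' : (forall x, eqQZ (q' x) (q x)) -> GS q' = GS q.
Proof. by move=> h; rewrite /GS; apply: eq_bigr => x _; exact: (e_eqQZ (h x)). Qed.

Lemma GS_aut q (th : G -> G) : bijective th -> GS (fun x => q (th x)) = GS q.
Proof. by move=> hb; rewrite /GS [RHS](reindex_inj (bij_inj hb)). Qed.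

Lemma GS_shift q c : GS (qshift q c) = e (- q c) * GS q.
Proof.
rewrite /GS mulr_sumr [in RHS](reindex_inj (addIr c)) /=.
apply: eq_bigr => x _.
rewrite -[expi (ratr (qshift q c x))]/(e _) -[expi (ratr (q (x + c)))]/(e _) -e_add.
by congr e; rewrite /qshift /bq; ring.
Qed.

Lemma GS_neq0 q : quad_linking_function q -> GS q != 0.
Proof.
move=> hq.
have hP : GS q * \sum_(y : G) e (- q y) = #|G|%:R.
  rewrite mulrC mulr_suml.
  transitivity (\sum_(y : G) \sum_(x : G) e (q x + bq q x y)).
    apply: eq_bigr => y _; rewrite /GS (reindex_inj (addIr y)) mulr_sumr.
    apply: eq_bigr => x _; rewrite -[expi (ratr (q (x + y)))]/(e _) -e_add.
    by congr e; rewrite /bq; ring.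
  rewrite exchange_big /=.
  transitivity (\sum_(x : G) e (q x) * \sum_(y : G) e (bq q x y)).
    apply: eq_bigr => x _; rewrite mulr_sumr; apply: eq_bigr => y _; exact: e_add.
  rewrite (bigD1 0) //= [X in _ + X]big1 ?addr0; last first.
    move=> x hx.
    have [z hz] : exists z, ~ eqQZ (bq q x z) 0.
      apply: NNPP => hn; move/eqP: hx; apply; apply: (lf_ns hq) => z.
      apply: eqQZ_trans (lf_sym hq _ _) _; apply: NNPP => hz; apply: hn; by exists z.
    by rewrite (@chi_sum0 _ (fun y => bq q x y) z) ?mulr0 // => u v; apply: lf_r.
  rewrite (e_intQ (_ : q 0 \is a Num.int)); last first.
    by have := qlf_0 hq; rewrite /eqQZ subr0.
  rewrite mul1r (eq_bigr (fun _ => 1)); first by rewrite sumr_const.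
  move=> y _; rewrite -e0; apply: e_eqQZ; exact: lf_0l.
apply/eqP => h0; move: hP; rewrite h0 mul0r => /eqP; rewrite eq_sym pnatr_eq0 => /eqP hc.
have : (0 < #|G|)%N by apply/card_gt0P; exists 0.
by rewrite hc.
Qed.

Lemma Kinv_spec q : GS q = `|GS q| * expi (Kinv q).
Proof.
rewrite /Kinv; have [t ht] := polar (GS q).
by case: (epsilon_spec (inhabits (0 : RR))
   (fun t => (0 <= t < 1)%R /\ GS q = `|GS q| * expi t) (ex_intro _ t ht)).
Qed.

End R.

Theorem theorem3p5 (G : finZmodType) (q0 q1 : G -> rat) :
  quad_linking_function q0 -> quad_linking_function q1 ->
  (isometric q0 q1 <->
   iso_pair (bq q0) (beta q0) (bq q1) (beta q1) /\ Kinv q0 = Kinv q1).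
Proof.
move=> hq0 hq1; split.
  case=> th [hth h].
  have hm : {morph th : x y / x + y} by case: hth.
  have hGS : GS q0 = GS q1.
    rewrite -(@GS_aut _ q1 th); last by case: hth.
    by symmetry; apply: GS_congr => x; exact: h x.
  split; last by rewrite /Kinv hGS.
  exists th; split => //.
    by move=> x y; rewrite -(bq_comp q1 hm); exact: bq_congr.
  exact: beta_aut hth hq0 hq1 h.
case=> [[th [hth hb hbeta]] hK].
have hm : {morph th : x y / x + y} by case: hth.
have thb : bijective th by case: hth.
pose q1' := fun x => q1 (th x).
have hq1' : quad_linking_function q1' := qlf_comp hq1 hth.
pose l := fun x => q1' x - q0 x.
have hl : homQZ l.
  move=> x y; have := hb x y; rewrite -(bq_comp q1 hm) /eqQZ /bq /l /q1' /= => h.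
  have -> : q1 (th (x + y)) - q0 (x + y) - (q1 (th x) - q0 x + (q1 (th y) - q0 y))
    = q1 (th (x + y)) - q1 (th x) - q1 (th y) - (q0 (x + y) - q0 x - q0 y) by ring.
  exact: h.
have hk : forall y, y *+ 1 = 0 -> eqQZ (l y) 0.
  move=> y; rewrite mulr1n => ->; rewrite /l /q1' (aut0 hth).
  have h1 := qlf_0 hq1; have h2 := qlf_0 hq0; move: h1 h2; rewrite /eqQZ !subr0 => h1 h2.
  exact: rpredB.
have [c hc] := @dual _ _ hq0 l 1 hl hk.
have hq1c : forall x, eqQZ (q1' x) (qshift q0 c x).
  move=> x; have := hc x; rewrite mulr1n /eqQZ /l /qshift => h.
  by have -> : q1' x - (q0 x + bq q0 x c) = q1' x - q0 x - bq q0 x c by ring.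
have hqs : quad_linking_function (qshift q0 c).
  apply: (qlf_congr hq1') => x; exact: eqQZ_sym.
have hcc : c + c = 0.
  have e1 : beta q1' = beta q0.
    apply: (bij_inj thb); rewrite hbeta.
    apply: beta_aut hth hq1' hq1 _ => x; exact: eqQZ_refl.
  have e2 : beta q1' = beta q0 + (c + c).
    by rewrite (beta_congr hqs hq1c) beta_shift.
  by apply: (@addrI _ (beta q0)); rewrite addr0 -e2 e1.
have hGS : GS q1 = e (- q0 c) * GS q0.
  rewrite -(@GS_aut _ q1 th thb) -/q1' (GS_congr hq1c) GS_shift //.
have hq0c : (q0 c) \is a Num.int.
  have n0 := GS_neq0 hq0.
  have hK0 := Kinv_spec q0; have hK1 := Kinv_spec q1.
  have : GS q1 = GS q0.
    rewrite {1}hK1 -hK hGS normrM norm_e mul1r -hK0 //.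
  rewrite hGS -{2}(mul1r (GS q0)) => /(mulIf n0) /e_eq1.
  by rewrite rpredN.
have hbcc : (bq q0 c c) \is a Num.int.
  rewrite /bq hcc.
  have h2 := qlf_0 hq0; move: h2; rewrite /eqQZ subr0 => h2.
  by apply: rpredB => //; apply: rpredB.
pose rho := fun x => if bq q0 x c \is a Num.int then x else x + c.
have h2 : forall x, (bq q0 x c) *+ 2 \is a Num.int.
  move=> x.
  have h1 := lf_Mnr hq0 c x 2; have h3 := lf_sym hq0 c x; have h4 := lf_0r hq0 x.
  rewrite mulr2n hcc in h1.
  move: h1 h3 h4; rewrite /eqQZ subr0 => h1 h3 h4.
  have -> : bq q0 x c *+ 2 = - (bq q0 x 0 - bq q0 c x *+ 2) + bq q0 x 0 - (bq q0 c x - bq q0 x c) *+ 2.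
    rewrite !mulr2n; ring.
  apply: rpredB; last exact: rpredMn.
  by apply: rpredD => //; rewrite rpredN.
have hadd : forall x y, (bq q0 (x + y) c \is a Num.int) =
    ((bq q0 x c \is a Num.int) == (bq q0 y c \is a Num.int)).
  by move=> x y; rewrite (int_eqQZ (lf_l hq0 x y c)) half_add.
have hrho_m : {morph rho : x y / x + y}.
  move=> x y; rewrite /rho hadd.
  case: (bq q0 x c \is a Num.int); case: (bq q0 y c \is a Num.int) => /=.
  - by [].
  - by rewrite addrA.
  - by rewrite addrAC.
  - by rewrite addrACA hcc addr0.
have hrho_inv : cancel rho rho.
  move=> x; rewrite /rho; case hx: (bq q0 x c \is a Num.int); first by rewrite hx.
  have hxc : eqQZ (bq q0 (x + c) c) (bq q0 x c).
    apply: eqQZ_trans (lf_l hq0 x c c) _.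
    rewrite -[X in eqQZ _ X]addr0; apply: eqQZ_add; first exact: eqQZ_refl.
    by rewrite /eqQZ subr0.
  by rewrite (int_eqQZ hxc) hx -addrA hcc addr0.
have hrho : is_aut rho by split => //; exists rho.
exists (fun x => th (rho x)); split.
  split; first by move=> x y; rewrite hrho_m hm.
  exact: (bij_comp thb (Bijective hrho_inv hrho_inv)).
move=> x; apply: eqQZ_trans (hq1c (rho x)) _.
rewrite /qshift /rho; case hx: (bq q0 x c \is a Num.int).
  by rewrite /eqQZ (_ : q0 x + bq q0 x c - q0 x = bq q0 x c) //; ring.
rewrite /eqQZ /bq -[x + c + c]addrA hcc addr0.
have -> : q0 (x + c) + (q0 x - q0 (x + c) - q0 c) - q0 x = - q0 c by ring.
by rewrite rpredN.
Qed.
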